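(* Let $(X,d)$ be a metric space, $x_0\in X$, $n\geq 1$. For all $a,b\in\pi_n(X,x_0)$, $\rho(a,b)=\rho(a^{-1},b^{-1})$.
   Context: $\Omega^n(X,x_0)$ is the set of continuous maps $\alpha:[0,1]^n\to X$ with $\alpha(\partial[0,1]^n)=\{x_0\}$, with uniform metric $\mu(\alpha,\beta)=\sup_{t\in[0,1]^n}d(\alpha(t),\beta(t))$. For $a,b\in\pi_n(X,x_0)$, $\rho(a,b)=\inf\{\mu(\alpha,\beta)\mid\alpha\in a,\beta\in b\}$. *)

(* Defs.v *)
From HB Require Import structures.
From mathcomp Require Import all_boot all_order all_algebra.
From mathcomp Require Import boolp classical_sets reals ereal.
Import Order.TTheory GRing.Theory Num.Theory.
Local Open Scope classical_set_scope.
Local Open Scope ring_scope.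

Section Defs.
Variables (R : realType) (X : Type) (d : X -> X -> R).

Definition is_metric : Prop :=
  [/\ forall x y, 0 <= d x y,
      forall x y, d x y = 0 <-> x = y,
      forall x y, d x y = d y x &
      forall x y z, d x z <= d x y + d y z].

Definition cube (n : nat) : set ('I_n -> R) :=
  [set t | forall i, 0 <= t i <= 1].

Definition cube_boundary (n : nat) : set ('I_n -> R) :=
  [set t | cube n t /\ exists i, t i = 0 \/ t i = 1].

Definition unit_interval : set R := [set s | 0 <= s <= 1].

(* continuity on the cube, for the (max) Euclidean topology of [0,1]^n *)
Definition cont_on_cube (n : nat) (f : ('I_n -> R) -> X) : Prop :=
  forall t, cube n t -> forall e, 0 < e -> exists2 del, 0 < del &
    forall s, cube n s -> (forall i, `|s i - t i| < del) -> d (f s) (f t) < e.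

Definition Omega (n : nat) (x0 : X) : set (('I_n -> R) -> X) :=
  [set f | cont_on_cube n f /\ forall t, cube_boundary n t -> f t = x0].

Definition homotopic_rel (n : nat) (x0 : X) (f g : ('I_n -> R) -> X) : Prop :=
  exists H : R -> ('I_n -> R) -> X,
    [/\ (forall u t, unit_interval u -> cube n t -> forall e, 0 < e ->
           exists2 del, 0 < del & forall v s, unit_interval v -> cube n s ->
             `|v - u| < del -> (forall i, `|s i - t i| < del) ->
             d (H v s) (H u t) < e),
        forall t, cube n t -> H 0 t = f t,
        forall t, cube n t -> H 1 t = g t &
        forall u t, unit_interval u -> cube_boundary n t -> H u t = x0].

Definition htpy_class (n : nat) (x0 : X) (f : ('I_n -> R) -> X)
  : set (('I_n -> R) -> X) :=
  [set g | Omega n x0 g /\ homotopic_rel n x0 f g].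

(* uniform metric mu (as an extended real; it is finite by compactness) *)
Definition mu (n : nat) (f g : ('I_n -> R) -> X) : \bar R :=
  ereal_sup [set (d (f t) (g t))%:E | t in cube n].

Definition rho (n : nat) (a b : set (('I_n -> R) -> X)) : \bar R :=
  ereal_inf [set mu n f g | f in a & g in b].

(* reversal in the first coordinate: representative of the inverse class *)
Definition loop_inv (n : nat) (f : ('I_n -> R) -> X) : ('I_n -> R) -> X :=
  fun t => f (fun i => if nat_of_ord i == 0%N then 1 - t i else t i).

End Defs.

Arguments is_metric {R X} d.
Arguments cube {R} n.
Arguments cube_boundary {R} n.
Arguments unit_interval {R}.
Arguments cont_on_cube {R X} d n f.
Arguments Omega {R X} d n x0.
Arguments homotopic_rel {R X} d n x0 f g.
Arguments htpy_class {R X} d n x0 f.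
Arguments mu {R X} d n f g.
Arguments rho {R X} d n a b.
Arguments loop_inv {R X} n f.

(* Main.v *)
Require Import Defs.
From HB Require Import structures.
From mathcomp Require Import all_boot all_order all_algebra.
From mathcomp Require Import boolp classical_sets reals ereal.
Import Order.TTheory GRing.Theory Num.Theory.
Local Open Scope classical_set_scope.
Local Open Scope ring_scope.

Set Implicit Arguments.
Section Aux.
Variables (R : realType) (X : Type) (d : X -> X -> R) (x0 : X) (n : nat).
Implicit Types (h f g : (('I_n -> R) -> X)) (t s : 'I_n -> R).

Definition rf (t : 'I_n -> R) : 'I_n -> R :=
  fun i => if nat_of_ord i == 0%N then 1 - t i else t i.

Lemma rfK t : rf (rf t) = t.
Proof. apply: funext => i; rewrite /rf /=; case: (_ == _) => //; by rewrite opprB addrC subrK. Qed.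

Lemma rf_cube t : cube n t -> cube n (rf t).
Proof.
move=> ht i; rewrite /rf; case: ifP => _; last exact: ht.
have /andP[h0 h1] := ht i; apply/andP; split.
  by rewrite subr_ge0.
by rewrite lerBlDr lerDl.
Qed.

Lemma rf_bd t : cube_boundary n t -> cube_boundary n (rf t).
Proof.
move=> [hc [i hi]]; split; first exact: rf_cube.
exists i; rewrite /rf; case: ifP => _ //.
by case: hi => ->; [right; rewrite subr0 | left; rewrite subrr].
Qed.

Lemma rf_dist s t i : `|rf s i - rf t i| = `|s i - t i|.
Proof.
rewrite /rf; case: ifP => _ //.
by rewrite opprB addrC addrA subrK -normrN opprB.
Qed.

Lemma loop_invE h t : loop_inv n h t = h (rf t).
Proof. by []. Qed.

Lemma loop_invK h : loop_inv n (loop_inv n h) = h.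
Proof. by apply: funext => t; rewrite !loop_invE rfK. Qed.

Lemma Omega_inv h : Omega d n x0 h -> Omega d n x0 (loop_inv n h).
Proof.
move=> [hc hb]; split.
  move=> t ht e he; have [del hdel H] := hc _ (rf_cube ht) e he.
  exists del => // s hs hst; rewrite !loop_invE; apply: H; first exact: rf_cube.
  by move=> i; rewrite rf_dist.
by move=> t ht; rewrite loop_invE; apply: hb; apply: rf_bd.
Qed.

Lemma class_inv f h : htpy_class d n x0 f h ->
  htpy_class d n x0 (loop_inv n f) (loop_inv n h).
Proof.
move=> [hO [H [Hc H0 H1 Hb]]]; split; first exact: Omega_inv.
exists (fun u t => H u (rf t)); split.
- move=> u t hu ht e he; have [del hdel K] := Hc u _ hu (rf_cube ht) e he.
  exists del => // v s hv hs hvu hst; apply: K => //; first exact: rf_cube.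
  by move=> i; rewrite rf_dist.
- by move=> t ht; rewrite H0 //; apply: rf_cube.
- by move=> t ht; rewrite H1 //; apply: rf_cube.
- by move=> u t hu ht; apply: Hb => //; apply: rf_bd.
Qed.

Lemma mu_inv f g : mu d n (loop_inv n f) (loop_inv n g) = mu d n f g.
Proof.
rewrite /mu; congr ereal_sup; apply/seteqP; split => x [t ht <-].
  by exists (rf t) => //; apply: rf_cube.
by exists (rf t); [apply: rf_cube | rewrite !loop_invE rfK].
Qed.

End Aux.

Theorem lemma4p2 (R : realType) (X : Type) (d : X -> X -> R) (x0 : X) (n : nat)
  (hd : is_metric d) (hn : (0 < n)%N)
  (f g : ('I_n -> R) -> X) (hf : Omega d n x0 f) (hg : Omega d n x0 g) :
  rho d n (htpy_class d n x0 f) (htpy_class d n x0 g)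
  = rho d n (htpy_class d n x0 (loop_inv n f)) (htpy_class d n x0 (loop_inv n g)).
Proof.
rewrite /rho; congr ereal_inf; apply/seteqP; split => x [h hh [k hk <-]].
  exists (loop_inv n h); first exact: class_inv.
  exists (loop_inv n k); first exact: class_inv.
  exact: mu_inv.
exists (loop_inv n h); first by rewrite -(@loop_invK R X n f); apply: class_inv.
exists (loop_inv n k); first by rewrite -(@loop_invK R X n g); apply: class_inv.
by rewrite -mu_inv !loop_invK.
Qed.
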